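(* In the real plane with Euclidean coordinates $(x,y)$, let $\Gamma$ be a circle, and let $C_1=[1:0:0]$ and $C_2=[\alpha:1:0]$, with $\alpha\ge 0$, be points on the line at infinity (so the line $C_1C_2$ is disjoint from $\Gamma$); let $\mathcal{C}^*$ be the singular dual conic given by $C_1,C_2$. Then the polygonal lines inscribed in $\Gamma$ and circumscribed about $\mathcal{C}^*$ satisfy: (i) there are no such closed polygons with an odd number of sides; (ii) such a polygonal line is closed with $2n$ sides if and only if $$\arctan\left(\frac{1}{\alpha}\right)\in\left\{\frac{k\pi}{n}\ \middle|\ 1\le k<n,\ \gcd(k,n)=1\right\}.$$
   Context: The singular dual conic $\mathcal{C}^*$ given by two distinct points $C_1,C_2$ is the union of the pencils of lines through $C_1$ and through $C_2$; here lines through $C_1$ are the lines parallel to the direction $(1,0)$ and lines through $C_2$ are the lines parallel to the direction $(\alpha,1)$. A polygonal line $A_1A_2\dots$ is inscribed in $\Gamma$ and circumscribed about $\mathcal{C}^*$ if all vertices lie on $\Gamma$ and the sides alternately pass through $C_1$ and $C_2$; it is closed with $N$ sides if $A_{N+1}=A_1$. For $\alpha=0$, $\arctan(1/\alpha)$ is understood as $\pi/2$. *)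

(* Defs.v *)
From Stdlib Require Import Reals Lra Arith.
Open Scope R_scope.

Definition point : Type := (R * R)%type.

Definition on_circle (c : point) (r : R) (P : point) : Prop :=
  (fst P - fst c) ^ 2 + (snd P - snd c) ^ 2 = r ^ 2.

(* The line through P and Q (P <> Q) passes through the point at infinity
   [p : q : 0], i.e. it is parallel to the direction (p, q). *)
Definition line_through_inf (P Q : point) (p q : R) : Prop :=
  (fst Q - fst P) * q - (snd Q - snd P) * p = 0.

(* A polygonal line A_1 A_2 ... A_{N+1} with N sides (here A_{i+1} is A i),
   inscribed in the circle (c, r) and circumscribed about the singular dual
   conic given by C1 = [1:0:0] and C2 = [alpha:1:0]: all vertices on the
   circle, consecutive vertices distinct (sides are genuine lines), and the
   sides alternately pass through C1 (sides 1,3,5,...) and C2 (2,4,...). *)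
Definition polygonal_line (c : point) (r alpha : R) (N : nat)
    (A : nat -> point) : Prop :=
  (forall i, (i <= N)%nat -> on_circle c r (A i)) /\
  (forall i, (i < N)%nat ->
     A i <> A (S i) /\
     (if Nat.even i then line_through_inf (A i) (A (S i)) 1 0
      else line_through_inf (A i) (A (S i)) alpha 1)).

Definition closed_with (N : nat) (A : nat -> point) : Prop := A N = A 0%nat.

Definition closed_exactly (N : nat) (A : nat -> point) : Prop :=
  A N = A 0%nat /\ (forall j, (0 < j < N)%nat -> A j <> A 0%nat).

Definition angle_of (alpha : R) : R :=
  if Req_EM_T alpha 0 then PI / 2 else atan (1 / alpha).

(* Main.v *)
Require Import Defs.
From Stdlib Require Import Reals Arith.
From Stdlib Require Import Lra Lia ZArith.
Open Scope R_scope.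

Definition subp (P c : point) : point := (fst P - fst c, snd P - snd c).
Definition rotv (a : R) (u : point) : point :=
  (cos a * fst u - sin a * snd u, sin a * fst u + cos a * snd u).
Definition refl1 (u : point) : point := (- fst u, snd u).
Definition S2 (t : R) (u : point) : point :=
  (fst u - 2 * cos t * (cos t * fst u + sin t * snd u),
   snd u - 2 * sin t * (cos t * fst u + sin t * snd u)).

Lemma pair_ext (p q : point) : fst p = fst q -> snd p = snd q -> p = q.
Proof. destruct p, q; simpl; intros; subst; auto. Qed.

Lemma subp_inj P Q c : subp P c = subp Q c -> P = Q.
Proof.
  destruct P, Q, c; unfold subp; simpl; intro H; inversion H.
  apply pair_ext; simpl; lra.
Qed.

Lemma rot_comp a b u : rotv a (rotv b u) = rotv (a + b) u.
Proof.
  unfold rotv; apply pair_ext; simpl; rewrite ?cos_plus, ?sin_plus; ring.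
Qed.

Lemma rot0 u : rotv 0 u = u.
Proof. unfold rotv; rewrite cos_0, sin_0; apply pair_ext; simpl; ring. Qed.

Lemma refl1_rot a u : refl1 (rotv a u) = rotv (- a) (refl1 u).
Proof.
  unfold rotv, refl1; rewrite cos_neg, sin_neg; apply pair_ext; simpl; ring.
Qed.

Lemma S2_refl1 t v : S2 t (refl1 v) = rotv (2 * t) v.
Proof.
  unfold S2, refl1, rotv; apply pair_ext; simpl.
  - rewrite cos_2a_cos, sin_2a; ring.
  - rewrite cos_2a_sin, sin_2a; ring.
Qed.

Lemma step_even c r P Q : on_circle c r P -> on_circle c r Q -> P <> Q ->
  line_through_inf P Q 1 0 -> subp Q c = refl1 (subp P c).
Proof.
  destruct P as [px py], Q as [qx qy], c as [cx cy].
  unfold on_circle, line_through_inf, subp, refl1; simpl; intros H1 H2 Hne Hl.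
  assert (qy = py) by lra. subst qy.
  assert (E : (qx - px) * (qx + px - 2 * cx) = 0) by nra.
  destruct (Rmult_integral _ _ E) as [E1|E1].
  - exfalso; apply Hne; f_equal; lra.
  - apply pair_ext; simpl; lra.
Qed.

Lemma step_odd c r alpha t P Q : 0 < sin t -> alpha * sin t = cos t ->
  on_circle c r P -> on_circle c r Q -> P <> Q ->
  line_through_inf P Q alpha 1 -> subp Q c = S2 t (subp P c).
Proof.
  intros hs hc.
  destruct P as [px py], Q as [qx qy], c as [cx cy].
  unfold on_circle, line_through_inf, subp, S2; simpl; intros H1 H2 Hne Hl.
  set (x := px - cx) in *. set (y := py - cy) in *.
  set (dy := qy - py).
  assert (Hdx : qx - px = alpha * dy) by (unfold dy; lra).
  assert (Hdy : dy <> 0).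
  { intro D. apply Hne. rewrite D in Hdx. f_equal; unfold dy in *; lra. }
  assert (Hq1 : qx - cx = x + alpha * dy) by (unfold x; lra).
  assert (Hq2 : qy - cy = y + dy) by (unfold y, dy; lra).
  rewrite Hq1, Hq2 in H2. rewrite <- H1 in H2.
  assert (E : dy * ((alpha ^ 2 + 1) * dy + 2 * (alpha * x + y)) = 0).
  { replace (dy * ((alpha ^ 2 + 1) * dy + 2 * (alpha * x + y))) with
      ((x + alpha * dy) ^ 2 + (y + dy) ^ 2 - (x ^ 2 + y ^ 2)) by ring. lra. }
  destruct (Rmult_integral _ _ E) as [E1|E1]; [contradiction|].
  set (s := sin t) in *. set (co := cos t) in *.
  assert (Hsc : s ^ 2 + co ^ 2 = 1).
  { unfold s, co. pose proof (sin2_cos2 t) as K. unfold Rsqr in K. lra. }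
  assert (E2 : dy = - 2 * s * (co * x + s * y)).
  { assert (E3 : s ^ 2 * ((alpha ^ 2 + 1) * dy + 2 * (alpha * x + y)) = 0)
      by (rewrite E1; ring).
    rewrite <- hc in Hsc |- *. nra. }
  apply pair_ext; simpl.
  - rewrite Hq1, E2, <- hc. ring.
  - rewrite Hq2, E2. ring.
Qed.

Lemma even_2m m : Nat.even (2 * m) = true.
Proof. rewrite Nat.even_mul; reflexivity. Qed.
Lemma even_2m1 m : Nat.even (S (2 * m)) = false.
Proof. rewrite Nat.even_succ, <- Nat.negb_even, even_2m; reflexivity. Qed.

Section Chain.
Variables (c : point) (r alpha t : R).
Hypothesis hs : 0 < sin t.
Hypothesis hc : alpha * sin t = cos t.

Lemma chain N A : polygonal_line c r alpha N A -> forall m, (2 * m <= N)%nat ->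
  subp (A (2 * m)%nat) c = rotv (2 * (INR m * t)) (subp (A 0%nat) c).
Proof.
  intros [Hc Hs]. induction m as [|m IH]; intros Hm.
  - simpl. replace (2 * (0 * t)) with 0 by ring. now rewrite rot0.
  - assert (Hodd := Hs (S (2 * m)) ltac:(lia)).
    assert (Hev := Hs (2 * m)%nat ltac:(lia)).
    rewrite even_2m1 in Hodd. rewrite even_2m in Hev.
    destruct Hodd as [Hne1 Hl1]. destruct Hev as [Hne0 Hl0].
    replace (2 * S m)%nat with (S (S (2 * m))) by lia.
    rewrite (step_odd c r alpha t (A (S (2 * m))) (A (S (S (2 * m)))) hs hc); try apply Hc; try lia; auto.
    rewrite (step_even c r (A (2 * m)%nat) (A (S (2 * m)))); try apply Hc; try lia; auto.
    rewrite IH by lia. rewrite S2_refl1, rot_comp. f_equal. rewrite S_INR. ring.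
Qed.

Lemma chain_odd N A : polygonal_line c r alpha N A -> forall m, (2 * m + 1 <= N)%nat ->
  subp (A (S (2 * m))) c = refl1 (rotv (2 * (INR m * t)) (subp (A 0%nat) c)).
Proof.
  intros HP m Hm. pose proof HP as [Hc Hs].
  assert (Hev := Hs (2 * m)%nat ltac:(lia)). rewrite even_2m in Hev.
  destruct Hev as [Hne0 Hl0].
  rewrite (step_even c r (A (2 * m)%nat) (A (S (2 * m)))); try apply Hc; try lia; auto.
  rewrite (chain N A HP m) by lia. reflexivity.
Qed.

Lemma rot_fix a u : 0 < fst u ^ 2 + snd u ^ 2 -> (rotv (2 * a) u = u <-> sin a = 0).
Proof.
  intros Hu; split.
  - intro H. unfold rotv in H.
    pose proof (f_equal fst H) as H1. pose proof (f_equal snd H) as H2. simpl in H1, H2.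
    assert (E : (cos (2 * a) - 1) * (fst u ^ 2 + snd u ^ 2) = 0).
    { replace ((cos (2 * a) - 1) * (fst u ^ 2 + snd u ^ 2)) with
        (fst u * (cos (2 * a) * fst u - sin (2 * a) * snd u - fst u) +
         snd u * (sin (2 * a) * fst u + cos (2 * a) * snd u - snd u)) by ring.
      rewrite H1, H2. ring. }
    destruct (Rmult_integral _ _ E) as [E1|E1]; [|lra].
    rewrite cos_2a_sin in E1. nra.
  - intro H. unfold rotv. apply pair_ext; simpl.
    + rewrite cos_2a_sin, sin_2a, H; ring.
    + rewrite cos_2a_sin, sin_2a, H; ring.
Qed.

Lemma u0_pos P : 0 < r -> on_circle c r P -> 0 < fst (subp P c) ^ 2 + snd (subp P c) ^ 2.
Proof. unfold on_circle, subp; simpl; intros; nra. Qed.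

Lemma odd_not_closed N A : Nat.odd N = true -> polygonal_line c r alpha N A ->
  A N <> A 0%nat.
Proof.
  intros Ho HP Heq. pose proof HP as [Hc Hs].
  apply Nat.odd_spec in Ho. destruct Ho as [m Hm]. subst N.
  set (u0 := subp (A 0%nat) c).
  assert (H1 := chain_odd _ A HP m ltac:(lia)).
  replace (2 * m + 1)%nat with (S (2 * m)) in Heq by lia.
  rewrite Heq in H1. fold u0 in H1.
  set (a := INR m * t) in *.
  set (w := rotv a u0).
  assert (Hw : refl1 w = w).
  { replace (2 * a) with (a + a) in H1 by ring.
    rewrite <- rot_comp, refl1_rot in H1. fold w in H1.
    assert (K : rotv a (rotv (- a) (refl1 w)) = rotv a u0) by (rewrite <- H1; reflexivity).
    rewrite rot_comp in K. replace (a + - a) with 0 in K by ring.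
    rewrite rot0 in K. exact K. }
  destruct (Nat.Even_or_Odd m) as [[j Hj]|[j Hj]]; subst m.
  -
    assert (E1 := chain _ A HP j ltac:(lia)).
    assert (E2 := chain_odd _ A HP j ltac:(lia)).
    fold u0 in E1, E2.
    assert (Ew : w = subp (A (2 * j)%nat) c).
    { rewrite E1. unfold w, a. f_equal. rewrite mult_INR. simpl. ring. }
    rewrite <- E1, <- Ew, Hw in E2. rewrite Ew in E2.
    apply subp_inj in E2.
    destruct (Hs (2 * j)%nat ltac:(lia)) as [Hne _]. now apply Hne.
  -
    assert (E1 := chain _ A HP (S j) ltac:(lia)).
    assert (E2 := chain_odd _ A HP j ltac:(lia)).
    fold u0 in E1, E2.
    assert (F1 : rotv (2 * (INR (S j) * t)) u0 = rotv t w).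
    { unfold w, a. rewrite rot_comp. f_equal. rewrite S_INR, plus_INR, mult_INR.
      simpl. ring. }
    assert (F2 : refl1 (rotv (2 * (INR j * t)) u0) = rotv t w).
    { rewrite <- Hw. unfold w, a. rewrite !refl1_rot, rot_comp. f_equal.
      rewrite plus_INR, mult_INR. simpl. ring. }
    rewrite F1 in E1. rewrite F2 in E2. rewrite <- E1 in E2.
    replace (2 * S j)%nat with (S (S (2 * j))) in E2 by lia.
    apply subp_inj in E2.
    destruct (Hs (S (2 * j)) ltac:(lia)) as [Hne _]. now apply Hne.
Qed.

End Chain.

Lemma angle_props alpha : 0 <= alpha ->
  0 < angle_of alpha <= PI / 2 /\ 0 < sin (angle_of alpha) /\
  alpha * sin (angle_of alpha) = cos (angle_of alpha).
Proof.
  intros Ha. unfold angle_of. destruct (Req_EM_T alpha 0) as [E|E].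
  - subst. rewrite sin_PI2, cos_PI2. pose proof PI_RGT_0. repeat split; lra.
  - assert (Hp : 0 < alpha) by lra.
    pose proof (atan_bound (1 / alpha)) as [B1 B2].
    assert (Hpos : 0 < atan (1 / alpha)).
    { rewrite <- atan_0. apply atan_increasing. apply Rdiv_lt_0_compat; lra. }
    assert (Hcos : 0 < cos (atan (1 / alpha))) by (apply cos_gt_0; lra).
    pose proof (tan_atan (1 / alpha)) as T. unfold tan in T.
    assert (Hsin : sin (atan (1 / alpha)) = cos (atan (1 / alpha)) / alpha).
    { apply (Rmult_eq_reg_r (/ cos (atan (1 / alpha)))).
      2: apply Rinv_neq_0_compat; lra.
      unfold Rdiv in T |- *. rewrite T. field. split; lra. }
    repeat split; try lra.
    + rewrite Hsin. apply Rdiv_lt_0_compat; lra.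
    + rewrite Hsin. field. lra.
Qed.

Lemma numth (t : R) (n : nat) : 0 < t <= PI / 2 -> (1 <= n)%nat ->
  ((sin (INR n * t) = 0 /\ forall m, (0 < m < n)%nat -> sin (INR m * t) <> 0) <->
   exists k : nat, (1 <= k < n)%nat /\ Nat.gcd k n = 1%nat /\
                   t = INR k * PI / INR n).
Proof.
  intros Ht Hn. pose proof PI_RGT_0 as HPI.
  assert (HnR : 0 < INR n) by (apply lt_0_INR; lia).
  split.
  - intros [H0 Hm]. apply sin_eq_0_0 in H0. destruct H0 as [K HK].
    assert (HKp : (0 < K)%Z).
    { apply lt_IZR. assert (0 < IZR K * PI) by (rewrite <- HK; nra). nra. }
    set (k := Z.to_nat K).
    assert (HkK : IZR K = INR k).
    { unfold k. rewrite INR_IZR_INZ, Z2Nat.id; [reflexivity|lia]. }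
    rewrite HkK in HK.
    assert (Hkn : (k < n)%nat).
    { apply INR_lt. assert (INR k * PI < INR n * PI) by nra.
      apply (Rmult_lt_reg_r PI); lra. }
    exists k. split; [split; lia|]. split.
    + destruct (Nat.eq_dec (Nat.gcd k n) 1) as [G|G]; [exact G|exfalso].
      set (d := Nat.gcd k n) in *.
      assert (Hd0 : d <> 0%nat).
      { unfold d. intro Z. apply Nat.gcd_eq_0 in Z. lia. }
      destruct (Nat.gcd_divide_l k n) as [k' Hk'].
      destruct (Nat.gcd_divide_r k n) as [n' Hn']. fold d in Hk', Hn'.
      assert (Hn'p : (0 < n')%nat) by (destruct n'; lia).
      assert (Hn'n : (n' < n)%nat) by nia.
      apply (Hm n'); [lia|].
      apply sin_eq_0_1. exists (Z.of_nat k'). rewrite <- INR_IZR_INZ.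
      assert (Ed : INR n = INR n' * INR d) by (rewrite Hn', mult_INR; reflexivity).
      assert (Ek : INR k = INR k' * INR d) by (rewrite Hk' at 1; rewrite mult_INR; reflexivity).
      assert (HdR : 0 < INR d) by (apply lt_0_INR; lia).
      assert (Htt : t = INR k * PI / INR n) by (rewrite <- HK; field; lra).
      rewrite Htt, Ed, Ek. assert (0 < INR n') by (apply lt_0_INR; lia).
      field. repeat split; lra.
    + rewrite <- HK. field. lra.
  - intros [k [Hk [Hg Ht']]]. split.
    + apply sin_eq_0_1. exists (Z.of_nat k). rewrite <- INR_IZR_INZ.
      rewrite Ht'. field. lra.
    + intros m Hm H0. apply sin_eq_0_0 in H0. destruct H0 as [K HK].
      rewrite Ht' in HK.
      assert (HmR : 0 < INR m) by (apply lt_0_INR; lia).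
      assert (E : INR m * INR k = IZR K * INR n).
      { apply (Rmult_eq_reg_r (PI / INR n)); [|apply Rgt_not_eq, Rdiv_lt_0_compat; lra].
        replace (INR m * INR k * (PI / INR n)) with (INR m * (INR k * PI / INR n)) by (field; lra).
        rewrite HK. field. lra. }
      assert (HK0 : (0 <= K)%Z).
      { apply le_IZR. assert (0 <= INR m * INR k) by (apply Rmult_le_pos; apply pos_INR).
        nra. }
      assert (HkK : IZR K = INR (Z.to_nat K)).
      { rewrite INR_IZR_INZ, Z2Nat.id; [reflexivity|lia]. }
      rewrite HkK, <- !mult_INR in E. apply INR_eq in E.
      assert (Hdiv : Nat.divide n (k * m)).
      { exists (Z.to_nat K). lia. }
      apply Nat.gauss in Hdiv; [|rewrite Nat.gcd_comm; exact Hg].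
      apply Nat.divide_pos_le in Hdiv; lia.
Qed.

Lemma prefix c r alpha N A j : polygonal_line c r alpha N A -> (j <= N)%nat ->
  polygonal_line c r alpha j A.
Proof.
  intros [H1 H2] Hj. split; intros i Hi; [apply H1|apply H2]; lia.
Qed.

Theorem proposition3p7 (c : point) (r alpha : R) (hr : 0 < r) (halpha : 0 <= alpha) :
  (forall (N : nat) (A : nat -> point),
     Nat.odd N = true -> polygonal_line c r alpha N A -> ~ closed_with N A) /\
  (forall (n : nat) (A : nat -> point),
     (1 <= n)%nat -> polygonal_line c r alpha (2 * n) A ->
     (closed_exactly (2 * n) A <->
      exists k : nat, (1 <= k < n)%nat /\ Nat.gcd k n = 1%nat /\
                      angle_of alpha = INR k * PI / INR n)).
Proof.
  destruct (angle_props alpha halpha) as [Ht [hs hc]].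
  set (t := angle_of alpha) in *.
  split.
  - intros N A Ho HP Hcl. exact (odd_not_closed c r alpha t hs hc N A Ho HP Hcl).
  - intros n A Hn HP. rewrite <- numth by assumption.
    assert (Hu : 0 < fst (subp (A 0%nat) c) ^ 2 + snd (subp (A 0%nat) c) ^ 2).
    { apply (u0_pos c r); auto. apply (proj1 HP). lia. }
    assert (Key : forall m, (m <= n)%nat -> (A (2 * m)%nat = A 0%nat <-> sin (INR m * t) = 0)).
    { intros m Hm. rewrite <- (rot_fix (INR m * t) _ Hu).
      rewrite <- (chain c r alpha t hs hc _ A HP m) by lia. split.
      - intro E; now rewrite E.
      - apply subp_inj. }
    unfold closed_exactly. split.
    + intros [Hcl Hj]. split.
      * apply Key; auto.
      * intros m Hm Hs. apply (Hj (2 * m)%nat); [lia|]. apply Key; [lia|auto].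
    + intros [Hs Hm]. split; [apply Key; auto|].
      intros j Hj Heq. destruct (Nat.Even_or_Odd j) as [[m E]|[m E]]; subst j.
      * apply (Hm m); [lia|]. apply Key; [lia|auto].
      * apply (odd_not_closed c r alpha t hs hc (2 * m + 1) A).
        -- apply Nat.odd_spec. exists m. reflexivity.
        -- apply (prefix c r alpha (2 * n) A); [auto|lia].
        -- exact Heq.
Qed.
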